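(* Fix an arbitrary execution of Algorithm $\mathrm{tree}(G)$ on $G$, and let the rank $r$ and the set $U$ be as defined in the context. If $u,v,w$ are distinct vertices of $G$ with $uv,vw\in E(G)$, $\{u,v\}\subseteq U$, and $r(u)<r(v)<r(w)$, then $d_G(v)=2$.
   Context: $G$ is a finite connected simple undirected graph containing a vertex $a$ with $d_G(a)\ge 2$. For a subtree $T$ of $G$ and a vertex $u$ of $T$: - $V_T(u)$ is the set of vertices $v\in V(G)\setminus V(T)$ with $uv\in E(G)$. - $E_T(u)$ is the set of edges $uv$ of $G$ with $v\in V_T(u)$. - If $|V_T(u)|=1$, then $v_T(u)$ denotes the unique vertex of $V_T(u)$. Three sets of vertices of $T$ are defined: - $W_2(T)=\{u\in V(T): |V_T(u)|\ge 2\}$. - $W_1(T)=\{u\in V(T): |V_T(u)|=1,\ |V_{T\cup E_T(u)}(v_T(u))|\ge 2\}$. - $W_0(T)=\{u\in V(T): |V_T(u)|=1,\ |V_{T\cup E_T(u)}(v_T(u))|\le 1\}$. Algorithm $\mathrm{tree}(G)$ runs as follows. 1. Start with $T=\{a\}$. 2. While $V(T)\ne V(G)$: - If $W_2(T)\ne\emptyset$, pick an arbitrary $u\in W_2(T)$. - Else, if $W_1(T)\neq\emptyset$, pick an arbitrary $u\in W_1(T)$. - Else, let $u$ be the vertex of $W_0(T)$ that joined $V(T)$ most recently. - Set $T:=T\cup E_T(u)$ (''expand $T$ at $u$''). 3. Return $T$. Now fix an execution and let $T$ be the returned spanning tree, rooted at $a$. For $v\ne a$, let $p(v)$ be the parent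 of $v$ in $T$. For each vertex $u$ with $d_T(u)\ge 2$, the algorithm expanded at $u$ exactly once; let $T_u$ be the tree just before that expansion. Thus $u=p(v)$ if and only if $v\in V_{T_u}(u)$. The rank $r:V(G)\to\mathbb{Z}$ is defined by $r(a)=1$ and, for each edge $uv$ of $T$ with $u=p(v)$: - $r(v)=r(u)$ if $u\in W_2(T_u)$; - $r(v)=1+\max_{w\in V(T_u)} r(w)$ otherwise. $U$ is the set of vertices $v$ such that no other vertex has rank $r(v)$. *)

(* Defs.v *)
From mathcomp Require Import all_boot.
Set Implicit Arguments. Unset Strict Implicit. Unset Printing Implicit Defensive.

(* A graph is a relation e on a finite type T (assumed symmetric, irreflexive). *)
Section TreeAlgo.
Variables (T : finType) (e : rel T) (a : T).

Definition Vout (S : {set T}) (u : T) : {set T} := [set v | e u v & v \notin S].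

(* W_2, W_1, W_0 for the current tree with vertex set S.  The tree
   T \cup E_T(u) has vertex set v_T(u) |: S. *)
Definition inW2 (S : {set T}) (u : T) : bool :=
  (u \in S) && (1 < #|Vout S u|).
Definition inW1 (S : {set T}) (u : T) : bool :=
  [&& u \in S, #|Vout S u| == 1 &
      [exists v, (v \in Vout S u) && (1 < #|Vout (v |: S) v|)]].
Definition inW0 (S : {set T}) (u : T) : bool :=
  [&& u \in S, #|Vout S u| == 1 &
      [forall v, (v \in Vout S u) ==> (#|Vout (v |: S) v| <= 1)]].

(* An execution is given by the sequence of expanded vertices pick 0, pick 1, ...
   stateS pick i = vertex set of the tree after i expansions. *)
Fixpoint stateS (pick : nat -> T) (i : nat) : {set T} :=
  match i with
  | 0 => [set a]
  | i'.+1 => stateS pick i' :|: Vout (stateS pick i') (pick i')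
  end.

(* jtime pick i v = the number of the expansion at which v joined the tree
   (0 for a), meaningful for v \in stateS pick i. *)
Fixpoint jtime (pick : nat -> T) (i : nat) (v : T) : nat :=
  match i with
  | 0 => 0
  | i'.+1 => if v \in stateS pick i' then jtime pick i' v else i
  end.

(* rank pick i v = the rank r(v), meaningful for v \in stateS pick i. *)
Fixpoint rank (pick : nat -> T) (i : nat) (v : T) : nat :=
  match i with
  | 0 => 1
  | i'.+1 =>
      let S := stateS pick i' in
      let u := pick i' in
      if v \in S then rank pick i' v
      else if inW2 S u then rank pick i' u
      else (\max_(w in S) rank pick i' w).+1
  end.

Definition valid_step (pick : nat -> T) (i : nat) : bool :=
  let S := stateS pick i in
  let u := pick i in
  if [exists x, inW2 S x] then inW2 S u
  else if [exists x, inW1 S x] then inW1 S u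
  else inW0 S u && [forall x, inW0 S x ==> (jtime pick i x <= jtime pick i u)].

Definition valid_exec (pick : nat -> T) (k : nat) : Prop :=
  (forall i, i < k -> stateS pick i != setT /\ valid_step pick i) /\
  stateS pick k = setT.

Definition final_rank (pick : nat -> T) (k : nat) : T -> nat := rank pick k.
Definition Uset (pick : nat -> T) (k : nat) : {set T} :=
  [set v | [forall w, (w != v) ==> (final_rank pick k w != final_rank pick k v)]].

End TreeAlgo.

(* Main.v *)
Require Import Defs.
From mathcomp Require Import all_boot.
Set Implicit Arguments. Unset Strict Implicit. Unset Printing Implicit Defensive.

Definition Mx (T : finType) (e : rel T) (a : T) (pick : nat -> T) (i : nat) :=
  \max_(w in stateS e a pick i) rank e a pick i w.

Lemma stateS_S (T : finType) (e : rel T) (a : T) (pick : nat -> T) (i : nat) :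
  stateS e a pick i.+1 = stateS e a pick i :|: Vout e (stateS e a pick i) (pick i).
Proof. by []. Qed.

Lemma rank_S (T : finType) (e : rel T) (a : T) (pick : nat -> T) (i : nat) v :
  rank e a pick i.+1 v = if v \in stateS e a pick i then rank e a pick i v
    else if inW2 e (stateS e a pick i) (pick i) then rank e a pick i (pick i)
    else (Mx e a pick i).+1.
Proof. by []. Qed.

Lemma jtime_S (T : finType) (e : rel T) (a : T) (pick : nat -> T) (i : nat) v :
  jtime e a pick i.+1 v = if v \in stateS e a pick i then jtime e a pick i v else i.+1.
Proof. by []. Qed.

Lemma jtime_le (T : finType) (e : rel T) (a : T) (pick : nat -> T) (i : nat) v :
  jtime e a pick i v <= i.
Proof.
elim: i => [//|i IH]; rewrite jtime_S; case: ifP => // _; exact: leq_trans IH _.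
Qed.

Lemma stateS_mono (T : finType) (e : rel T) (a : T) (pick : nat -> T) i j :
  i <= j -> stateS e a pick i \subset stateS e a pick j.
Proof.
move=> le; rewrite -(subnK le); elim: (j - i) => [|n IH]; first by rewrite add0n.
rewrite addSn stateS_S; apply: subset_trans IH (subsetUl _ _).
Qed.

Lemma rank_stable (T : finType) (e : rel T) (a : T) (pick : nat -> T) i j v :
  i <= j -> v \in stateS e a pick i -> rank e a pick j v = rank e a pick i v.
Proof.
move=> le vi; rewrite -(subnK le); elim: (j - i) => [|n IH]; first by rewrite add0n.
rewrite addSn rank_S.
have -> : v \in stateS e a pick (n + i) by apply: (subsetP (stateS_mono _ _ _ (leq_addl n i))).
exact IH.
Qed.

Lemma rank_le_max (T : finType) (e : rel T) (a : T) (pick : nat -> T) i v :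
  v \in stateS e a pick i -> rank e a pick i v <= Mx e a pick i.
Proof. by move=> vi; rewrite /Mx; exact: leq_bigmax_cond. Qed.

Lemma rank_succ_le (T : finType) (e : rel T) (a : T) (pick : nat -> T) i v :
  pick i \in stateS e a pick i -> v \in stateS e a pick i.+1 ->
  rank e a pick i.+1 v <= (Mx e a pick i).+1.
Proof.
move=> pi vi; rewrite rank_S; case: ifP => vS.
  by apply: leq_trans (rank_le_max vS) _.
case: ifP => // _; by apply: leq_trans (rank_le_max pi) _.
Qed.

Lemma Vout_sub (T : finType) (e : rel T) (S S' : {set T}) z :
  S \subset S' -> Vout e S' z \subset Vout e S z.
Proof.
move=> sub; apply/subsetP => x; rewrite !inE => /andP [ex nS']; rewrite ex /=.
by apply/negP => xS; rewrite (subsetP sub _ xS) in nS'.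
Qed.

Lemma Vout_in (T : finType) (e : rel T) (S : {set T}) u y :
  e u y -> y \notin S -> y \in Vout e S u.
Proof. by move=> h1 h2; rewrite inE h1 h2. Qed.

Lemma UsetP (T : finType) (e : rel T) (a : T) (pick : nat -> T) k y w :
  y \in Uset e a pick k -> w != y -> rank e a pick k w != rank e a pick k y.
Proof. by rewrite inE => /forallP /(_ w) /implyP; apply. Qed.

Lemma pick_in (T : finType) (e : rel T) (a : T) (pick : nat -> T) i :
  valid_step e a pick i -> pick i \in stateS e a pick i.
Proof.
rewrite /valid_step; cbv beta zeta; case: ifP => _; first by case/andP.
case: ifP => _; first by case/andP.
by case/andP => /andP [].
Qed.

Lemma card_pick1 (T : finType) (e : rel T) (a : T) (pick : nat -> T) i :
  valid_step e a pick i -> ~~ inW2 e (stateS e a pick i) (pick i) ->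
  #|Vout e (stateS e a pick i) (pick i)| = 1.
Proof.
rewrite /valid_step; cbv beta zeta; case: ifP => _; first by move=> ->.
case: ifP => _; first by case/and3P => _ /eqP.
by case/andP => /and3P [_ /eqP].
Qed.

Lemma U_W2_pick (T : finType) (e : rel T) (a : T) (pick : nat -> T) k i :
  valid_exec e a pick k -> pick i \in Uset e a pick k -> i < k ->
  inW2 e (stateS e a pick i) (pick i) -> False.
Proof.
move=> [hv hf] Uy ik W2; have /andP [yS c] := W2.
have /set0Pn [c0 cV] : Vout e (stateS e a pick i) (pick i) != set0.
  by rewrite -card_gt0; exact: ltnW c.
have cS : c0 \in stateS e a pick i.+1 by rewrite stateS_S inE cV orbT.
have cn : c0 \notin stateS e a pick i by move: cV; rewrite inE => /andP [].
have r1 : rank e a pick k c0 = rank e a pick i (pick i).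
  by rewrite (rank_stable ik cS) rank_S (negbTE cn) W2.
have r2 : rank e a pick k (pick i) = rank e a pick i (pick i).
  by rewrite (rank_stable (ltnW ik) yS).
have neq : c0 != pick i by apply/eqP => E; rewrite E yS in cn.
by have := UsetP Uy neq; rewrite r1 r2 eqxx.
Qed.

Lemma U_W2_child (T : finType) (e : rel T) (a : T) (pick : nat -> T) k i y :
  valid_exec e a pick k -> y \in Uset e a pick k -> i < k ->
  y \in Vout e (stateS e a pick i) (pick i) ->
  inW2 e (stateS e a pick i) (pick i) -> False.
Proof.
move=> [hv hf] Uy ik yV W2; have /andP [pS _] := W2.
have yS : y \in stateS e a pick i.+1 by rewrite stateS_S inE yV orbT.
have yn : y \notin stateS e a pick i by move: yV; rewrite inE => /andP [].
have r1 : rank e a pick k y = rank e a pick i (pick i).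
  by rewrite (rank_stable ik yS) rank_S (negbTE yn) W2.
have r2 : rank e a pick k (pick i) = rank e a pick i (pick i).
  by rewrite (rank_stable (ltnW ik) pS).
have neq : pick i != y by apply/eqP => E; rewrite -E pS in yn.
by have := UsetP Uy neq; rewrite r1 r2 eqxx.
Qed.

Lemma Vout_setT (T : finType) (e : rel T) y : Vout e setT y = set0.
Proof. by apply/setP => z; rewrite !inE andbF. Qed.

Lemma U_succ_W2 (T : finType) (e : rel T) (a : T) (pick : nat -> T) k i y :
  valid_exec e a pick k -> y \in Uset e a pick k -> i < k ->
  (forall z, z \in stateS e a pick i -> #|Vout e (stateS e a pick i) z| <= 1) ->
  stateS e a pick i.+1 = y |: stateS e a pick i ->
  1 < #|Vout e (stateS e a pick i.+1) y| -> False.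
Proof.
move=> hex Uy ik le1 Si c; have [hv hf] := hex.
have ik1 : i.+1 < k.
  move: ik; rewrite leq_eqVlt => /orP [/eqP E|//].
  by move: c; rewrite E hf Vout_setT cards0.
have yS : y \in stateS e a pick i.+1 by rewrite Si setU11.
have ex2 : [exists x, inW2 e (stateS e a pick i.+1) x].
  by apply/existsP; exists y; rewrite /inW2 yS c.
have [_ vs] := hv _ ik1.
move: vs; rewrite /valid_step; cbv beta zeta; rewrite ex2 => p2.
have /andP [qS qc] := p2.
have pq : pick i.+1 = y.
  move: qS; rewrite Si in_setU1 => /orP [/eqP //|qS].
  have := le1 _ qS; move: qc.
  have := subset_leq_card (Vout_sub e (pick i.+1) (stateS_mono e a pick (leqnSn i))).
  move=> h1 h2 h3; by have := leq_trans (leq_trans h2 h1) h3.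
by apply: (U_W2_pick hex _ ik1 p2); rewrite pq.
Qed.

Lemma join_time (T : finType) (e : rel T) (a : T) (pick : nat -> T) k v :
  v \in stateS e a pick k -> v \notin stateS e a pick 0 ->
  exists j, [/\ j < k, v \notin stateS e a pick j & v \in stateS e a pick j.+1].
Proof.
elim: k => [-> //|k IH] vk v0.
case vS: (v \in stateS e a pick k).
  by have [j [jk h1 h2]] := IH vS v0; exists j; split => //; exact: ltnW.
by exists k; rewrite vS.
Qed.

Theorem lemma1 (T : finType) (e : rel T) (a : T) (pick : nat -> T) (k : nat) :
  symmetric e -> irreflexive e -> (forall x y, connect e x y) ->
  1 < #|[set x | e a x]| ->
  valid_exec e a pick k ->
  forall u v w : T, u != v -> v != w -> u != w ->
  e u v -> e v w ->
  u \in Uset e a pick k -> v \in Uset e a pick k ->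
  final_rank e a pick k u < final_rank e a pick k v < final_rank e a pick k w ->
  #|[set x | e v x]| = 2.
Proof.
move=> hsym hirr _ hdeg hex u v w nuv nvw nuw euv evw Uu Uv hr.
have [hv hf] := hex.
rewrite /final_rank in hr.
have irr x : e x x = false by rewrite hirr.
have kpos : 0 < k.
  case: k hv hf {hr Uu Uv hex} => // _ hf.
  have /set0Pn [b] : [set x | e a x] != set0 by rewrite -card_gt0; exact: ltnW hdeg.
  rewrite inE => eab; have : b \in [set: T] by [].
  by rewrite -hf /= inE => /eqP E; rewrite E irr in eab.
have aU : a \notin Uset e a pick k.
  apply/negP => aU.
  have [_ vs0] := hv 0 kpos.
  have VA : Vout e (stateS e a pick 0) a = [set x | e a x].
    apply/setP => x; rewrite /= !inE; case ex: (e a x) => //=.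
    by apply/eqP => E; rewrite E irr in ex.
  have ex2 : [exists x, inW2 e (stateS e a pick 0) x].
    by apply/existsP; exists a; rewrite /inW2 VA hdeg /= inE eqxx.
  have p0 := pick_in vs0.
  move: vs0; rewrite /valid_step; cbv beta zeta; rewrite ex2 => W2.
  move: p0; rewrite /= inE => /eqP p0.
  by apply: (U_W2_pick hex _ kpos W2); rewrite p0.
have uS0 : u \notin stateS e a pick 0.
  rewrite /= inE; apply/negP => /eqP E; move: Uu; rewrite E => Uu'.
  by rewrite Uu' in aU.
have uk : u \in stateS e a pick k by rewrite hf.
have [j [jk un uj1]] := join_time uk uS0.
set p := pick j.
have uV : u \in Vout e (stateS e a pick j) p.
  by move: uj1; rewrite stateS_S inE (negbTE un).
have [_ vsj] := hv j jk.
have pS : p \in stateS e a pick j := pick_in vsj.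
have nW2p : ~~ inW2 e (stateS e a pick j) p.
  by apply/negP => W2; apply: (U_W2_child hex Uu jk uV W2).
have noW2j : ~~ [exists x, inW2 e (stateS e a pick j) x].
  apply/negP => ex2; move: vsj; rewrite /valid_step; cbv beta zeta; rewrite ex2.
  by rewrite (negbTE nW2p).
have le1j z : z \in stateS e a pick j -> #|Vout e (stateS e a pick j) z| <= 1.
  move=> zS; move/existsPn: noW2j => /(_ z); by rewrite /inW2 zS /= -leqNgt.
have Vp : Vout e (stateS e a pick j) p = [set u].
  apply/eqP; rewrite eq_sym eqEcard sub1set uV cards1 (card_pick1 vsj nW2p).
  by [].
have Sj1 : stateS e a pick j.+1 = u |: stateS e a pick j.
  by rewrite stateS_S -/p Vp setUC.
have ru : rank e a pick k u = (Mx e a pick j).+1.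
  by rewrite (rank_stable jk uj1) rank_S (negbTE un) (negbTE nW2p).
have vn1 : v \notin stateS e a pick j.+1.
  apply/negP; rewrite Sj1 in_setU1 eq_sym (negbTE nuv) /= => vS.
  have : rank e a pick k v <= Mx e a pick j.
    by rewrite (rank_stable (ltnW jk) vS); exact: rank_le_max.
  move=> le; case/andP: hr => h _; move: h; rewrite ru => h.
  by have := ltn_trans (leq_ltn_trans le (ltnSn _)) h; rewrite ltnn.
have vV : v \in Vout e (stateS e a pick j.+1) u by rewrite inE euv vn1.
have jk1 : j.+1 < k.
  move: jk; rewrite leq_eqVlt => /orP [/eqP E|//].
  by move: vn1; rewrite E hf inE.
have uS1 : u \in stateS e a pick j.+1 by rewrite Sj1 setU11.
have nW2u : ~~ inW2 e (stateS e a pick j.+1) u.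
  apply/negP => /andP [_ c]; exact: (U_succ_W2 hex Uu jk le1j Sj1 c).
have Vu : Vout e (stateS e a pick j.+1) u = [set v].
  move: nW2u; rewrite /inW2 uS1 /= -leqNgt => le.
  apply/eqP; rewrite eq_sym eqEcard sub1set vV cards1 //.
have subj1 : stateS e a pick j \subset stateS e a pick j.+1 by apply: stateS_mono.
have le1j1 z : z \in stateS e a pick j.+1 -> #|Vout e (stateS e a pick j.+1) z| <= 1.
  move=> zS1; have : (z == u) || (z \in stateS e a pick j) by rewrite -in_setU1 -Sj1.
  case/orP => [/eqP ->|zS]; first by rewrite Vu cards1.
  exact: leq_trans (subset_leq_card (Vout_sub e z subj1)) (le1j z zS).
have noW2j1 : ~~ [exists x, inW2 e (stateS e a pick j.+1) x].
  apply/existsPn => z; rewrite /inW2; case zS: (z \in _) => //=.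
  by rewrite -leqNgt le1j1.
have noW1j : ~~ [exists x, inW1 e (stateS e a pick j) x].
  apply/negP => ex1; move: vsj; rewrite /valid_step; cbv beta zeta.
  rewrite (negbTE noW2j) ex1 -/p => /and3P [_ _ /existsP [y /andP [yV c]]].
  move: yV; rewrite Vp inE => /eqP yu; rewrite yu -Sj1 in c.
  by move: nW2u; rewrite /inW2 uS1 c.
have [_ vsj1] := hv _ jk1.
have pq : pick j.+1 = u.
  have qS := pick_in vsj1.
  move: vsj1; rewrite /valid_step; cbv beta zeta; rewrite (negbTE noW2j1).
  set q := pick j.+1 in qS *.
  have qc : (q == u) || (q \in stateS e a pick j) by rewrite -in_setU1 -Sj1.
  case: ifP => [_|/negbT noW1].
    case/orP: qc => [/eqP //|qS'].
    case/and3P => _ /eqP c1 /existsP [y /andP [yV c]].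
    have yV' : y \in Vout e (stateS e a pick j) q by apply: (subsetP (Vout_sub e q subj1)).
    have c1' : #|Vout e (stateS e a pick j) q| == 1.
      rewrite eqn_leq le1j //= card_gt0; apply/set0Pn; by exists y.
    have c' : 1 < #|Vout e (y |: stateS e a pick j) y|.
      apply: leq_trans c _; apply: subset_leq_card; apply: Vout_sub; exact: setUS.
    case/negP: noW1j; apply/existsP; exists q; rewrite /inW1 qS' c1' /=.
    by apply/existsP; exists y; rewrite yV' c'.
  case/andP => _ /forallP /(_ u) /implyP H.
  have W0u : inW0 e (stateS e a pick j.+1) u.
    rewrite /inW0 uS1 Vu cards1 /=; apply/forallP => y; apply/implyP => yV.
    move/existsPn: noW1 => /(_ u); rewrite /inW1 uS1 Vu cards1 /=.
    by move/existsPn => /(_ y); rewrite yV /= -leqNgt.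
  have := H W0u; rewrite !jtime_S (negbTE un).
  case/orP: qc => [/eqP //|qS'].
  by rewrite qS' leqNgt ltnS jtime_le.
have Sj2 : stateS e a pick j.+2 = v |: stateS e a pick j.+1.
  by rewrite stateS_S pq Vu setUC.
have jk2 : j.+2 <= k := jk1.
have vS2 : v \in stateS e a pick j.+2 by rewrite Sj2 setU11.
have rv : rank e a pick k v = (Mx e a pick j.+1).+1.
  by rewrite (rank_stable jk2 vS2) rank_S (negbTE vn1) pq (negbTE nW2u).
have wn2 : w \notin stateS e a pick j.+2.
  apply/negP => wS.
  have : rank e a pick k w <= (Mx e a pick j.+1).+1.
    rewrite (rank_stable jk2 wS); apply: rank_succ_le => //; exact: pick_in.
  move=> le; case/andP: hr => _ h; move: h; rewrite rv => h.
  by have := leq_trans h le; rewrite ltnn.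
have subj2 : stateS e a pick j \subset stateS e a pick j.+2 by apply: stateS_mono; apply: leq_trans (leqnSn j) (leqnSn _).
have wnj : w \notin stateS e a pick j.
  by apply/negP => wS; rewrite (subsetP subj2 _ wS) in wn2.
have vnj : v \notin stateS e a pick j.
  by apply/negP => vS; rewrite (subsetP subj1 _ vS) in vn1.
have Nv : [set x | e v x] = [set u; w].
  apply/setP => x; rewrite !inE.
  case: (eqVneq x u) => [->|xu]; first by rewrite hsym euv.
  case: (eqVneq x w) => [->|xw]; first by rewrite evw.
  apply/negbTE/negP => evx.
  have xv : x != v by apply/eqP => E; rewrite E irr in evx.
  case xS: (x \in stateS e a pick j.+2).
    move: xS; rewrite Sj2 Sj1 !in_setU1 (negbTE xv) (negbTE xu) /= => xS.
    have vx : v \in Vout e (stateS e a pick j) x by rewrite inE hsym evx vnj.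
    have c1 : #|Vout e (stateS e a pick j) x| == 1.
      rewrite eqn_leq le1j //= card_gt0; apply/set0Pn; by exists v.
    move/existsPn: noW1j => /(_ x); rewrite /inW1 xS c1 /=.
    move/existsPn => /(_ v); rewrite vx /= -leqNgt => le.
    have sub : [set u; w] \subset Vout e (v |: stateS e a pick j) v.
      apply/subsetP => y; rewrite !inE => /orP [/eqP ->|/eqP ->].
        by rewrite hsym euv (negbTE un) (negbTE nuv).
      by rewrite evw (negbTE wnj) eq_sym (negbTE nvw).
    by have := leq_trans (subset_leq_card sub) le; rewrite cards2 nuw.
  have sub : [set x; w] \subset Vout e (stateS e a pick j.+2) v.
    apply/subsetP => y /set2P [->|->].
      by apply: Vout_in => //; rewrite xS.
    exact: Vout_in.
  apply: (U_succ_W2 hex Uv jk1 le1j1 Sj2).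
  by apply: leq_trans (subset_leq_card sub); rewrite cards2 xw.
by rewrite Nv cards2 nuw.
Qed.
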